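(* Let $M$ be an end-decisive MM-QFA that accepts $L$ with bounded error, and let $M'$ be an end-decisive MM-QFA that accepts $L'$ with bounded positive one-sided error. Then there exists an MM-QFA $M''$ that accepts $L\cap L'$ with bounded error.
   Context: A measure-many quantum finite automaton (MM-QFA) over $\Sigma$ is a tuple $(Q,\Sigma,\{U_\sigma\}_{\sigma\in\Sigma\cup\{\$\}},q_0,Q_{acc},Q_{rej})$ with $Q$ finite indexing an orthonormal basis of $\mathbb{C}^Q$, end-marker $\$\notin\Sigma$, unitary $U_\sigma$, initial state $q_0$, and $Q$ partitioned into $Q_{acc},Q_{rej},Q_{non}$ with orthogonal projections $P_{acc},P_{rej},P_{non}$. On input $x$ it processes $x\$$ maintaining $(\psi,p_{acc},p_{rej})$, initially $(|q_0\rangle,0,0)$; on reading $\sigma$: $\psi'=U_\sigma\psi$, $p_{acc}\mathrel{+}=\|P_{acc}\psi'\|^2$, $p_{rej}\mathrel{+}=\|P_{rej}\psi'\|^2$, $\psi\leftarrow P_{non}\psi'$; the acceptance probability $p(x)$ is the final $p_{acc}$. It is end-decisive if $P_{acc}\psi'=0$ after reading every non-end-marker symbol, on every input. It accepts $K$ with bounded error if for some $\lambda$ and $\epsilon>0$, $p(x)>\lambda+\epsilon$ for $x\in K$ and $p(x)<\lambda-\epsilon$ for $x\notin K$; it accepts $K$ with bounded positive one-sided error if there is $c>0$ with $p(x)>c$ for $x\in K$ and $p(x)=0$ for $x\notin K$. *)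

(* Defs.v *)
From HB Require Import structures.
From mathcomp Require Import all_boot all_order all_algebra complex Rstruct.
Set Implicit Arguments. Unset Strict Implicit. Unset Printing Implicit Defensive.
Import Order.TTheory GRing.Theory Num.Theory.
Local Open Scope ring_scope.

Notation Real := Rdefinitions.R.
Notation Cplx := (Rdefinitions.R[i]).

Definition sqmod (z : Cplx) : Real := (complex.Re z) ^+ 2 + (complex.Im z) ^+ 2.

Definition adjmx n (A : 'M[Cplx]_n) : 'M[Cplx]_n := (map_mx (@conjc _) A)^T.

Definition unitary n (A : 'M[Cplx]_n) : Prop := A *m adjmx A = 1%:M.

Definition proj n (A : {set 'I_n}) (v : 'cV[Cplx]_n) : 'cV[Cplx]_n :=
  \col_i (if i \in A then v i 0 else 0).

Definition sqnorm n (v : 'cV[Cplx]_n) : Real := \sum_i sqmod (v i 0).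

(* MM-QFA over the alphabet Sigma. States Q = 'I_n; the end-marker $ is
   represented by None : option Sigma, a letter s by Some s. *)
Record MMQFA (Sigma : finType) := {
  nst : nat;
  U : option Sigma -> 'M[Cplx]_nst;
  U_unitary : forall a, unitary (U a);
  q0 : 'I_nst;
  Qacc : {set 'I_nst};
  Qrej : {set 'I_nst};
  Qacc_rej_disj : [disjoint Qacc & Qrej]
}.

Section Run.
Variables (Sigma : finType) (M : MMQFA Sigma).
Local Notation n := (nst M).

Definition Qnon : {set 'I_n} := ~: (Qacc M :|: Qrej M).

Definition init_vec : 'cV[Cplx]_n := \col_i (if i == q0 M then 1 else 0).

(* configuration (psi, p_acc, p_rej) *)
Definition step (c : 'cV[Cplx]_n * Real * Real) (a : option Sigma) :=
  let: (psi, pa, pr) := c in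
  let psi' := U M a *m psi in
  (proj Qnon psi', pa + sqnorm (proj (Qacc M) psi'), pr + sqnorm (proj (Qrej M) psi')).

Definition init_conf : 'cV[Cplx]_n * Real * Real := (init_vec, 0, 0).

Definition run (w : seq (option Sigma)) := foldl step init_conf w.

Definition acc_prob (x : seq Sigma) : Real :=
  (run (map Some x ++ [:: None])).1.2.

Definition end_decisive : Prop :=
  forall (w : seq Sigma) (s : Sigma),
    proj (Qacc M) (U M (Some s) *m (run (map Some w)).1.1) = 0.

Definition accepts_bounded_error (K : seq Sigma -> Prop) : Prop :=
  exists (lam eps : Real), 0 < eps /\
    forall x, (K x -> lam + eps < acc_prob x) /\ (~ K x -> acc_prob x < lam - eps).

Definition accepts_bounded_pos_one_sided (K : seq Sigma -> Prop) : Prop :=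
  exists c : Real, 0 < c /\
    forall x, (K x -> c < acc_prob x) /\ (~ K x -> acc_prob x = 0).
End Run.

(* Main.v *)
Require Import Defs.
From HB Require Import structures.
From mathcomp Require Import all_boot all_order all_algebra complex Rstruct.
From mathcomp Require Import ring lra.
From Stdlib Require Import Classical.
Set Implicit Arguments. Unset Strict Implicit. Unset Printing Implicit Defensive.
Import Order.TTheory GRing.Theory Num.Theory.
Local Open Scope ring_scope.

Lemma sqmodM (z w : Cplx) : sqmod (z * w) = sqmod z * sqmod w.
Proof. case: z => a b; case: w => c d; rewrite /sqmod /=. ring. Qed.

Lemma sqmodE (z : Cplx) : sqmod z = complex.Re (conjc z * z).
Proof. case: z => a b; rewrite /sqmod /=. ring. Qed.

Lemma sqmod_ge0 (z : Cplx) : 0 <= sqmod z.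
Proof. rewrite /sqmod; apply: addr_ge0; apply: sqr_ge0. Qed.

Lemma sqmod0 : sqmod 0 = 0.
Proof. by rewrite /sqmod /= expr0n /= addr0. Qed.

Section Kron.
Variables m n : nat.

Definition ek (k : 'I_(m*n)) : 'I_m * 'I_n :=
  enum_val (cast_ord (esym (mxvec_cast m n)) k).

Lemma ekK (i : 'I_m) (j : 'I_n) : ek (mxvec_index i j) = (i, j).
Proof. by rewrite /ek /mxvec_index cast_ordK enum_rankK. Qed.

Lemma ek_inj : injective ek.
Proof.
move=> k l; case/mxvec_indexP: k => i j; case/mxvec_indexP: l => i' j'.
by rewrite !ekK => -[-> ->].
Qed.

Lemma eq_mxvec (i i' : 'I_m) (j j' : 'I_n) :
  (mxvec_index i j == mxvec_index i' j') = (i == i') && (j == j').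
Proof. by rewrite -(inj_eq ek_inj) !ekK xpair_eqE. Qed.

Lemma sum_ek (V : nmodType) (F : 'I_(m*n) -> V) :
  \sum_k F k = \sum_i \sum_j F (mxvec_index i j).
Proof.
rewrite (reindex (fun p : 'I_m * 'I_n => mxvec_index p.1 p.2)) /=.
  by rewrite pair_bigA.
exists ek => [[i j] _ | k _] /=; first by rewrite ekK.
by case/mxvec_indexP: k => i j; rewrite ekK.
Qed.

Definition kr (A : 'M[Cplx]_m) (B : 'M[Cplx]_n) : 'M[Cplx]_(m*n) :=
  \matrix_(k, l) (A (ek k).1 (ek l).1 * B (ek k).2 (ek l).2).
Definition kv (v : 'cV[Cplx]_m) (w : 'cV[Cplx]_n) : 'cV[Cplx]_(m*n) :=
  \col_k (v (ek k).1 0 * w (ek k).2 0).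
Definition kset (S1 : {set 'I_m}) (S2 : {set 'I_n}) : {set 'I_(m*n)} :=
  [set k | ((ek k).1 \in S1) && ((ek k).2 \in S2)].

Lemma krE A B (i i' : 'I_m) (j j' : 'I_n) :
  kr A B (mxvec_index i j) (mxvec_index i' j') = A i i' * B j j'.
Proof. by rewrite mxE !ekK. Qed.

Lemma kvE v w (i : 'I_m) (j : 'I_n) : kv v w (mxvec_index i j) 0 = v i 0 * w j 0.
Proof. by rewrite mxE !ekK. Qed.

Lemma kr_mulv A B v w : kr A B *m kv v w = kv (A *m v) (B *m w).
Proof.
apply/colP => k; case/mxvec_indexP: k => i j.
rewrite kvE !mxE sum_ek big_distrl; apply: eq_bigr => i' _.
rewrite big_distrr; apply: eq_bigr => j' _.
by rewrite !mxE !ekK mulrACA.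
Qed.

Lemma kr_mul A B C D : kr A B *m kr C D = kr (A *m C) (B *m D).
Proof.
apply/matrixP => k l; case/mxvec_indexP: k => i j; case/mxvec_indexP: l => i2 j2.
rewrite krE !mxE sum_ek big_distrl; apply: eq_bigr => i' _.
rewrite big_distrr; apply: eq_bigr => j' _.
by rewrite !mxE !ekK mulrACA.
Qed.

Lemma adj_kr A B : adjmx (kr A B) = kr (adjmx A) (adjmx B).
Proof.
apply/matrixP => k l; case/mxvec_indexP: k => i j; case/mxvec_indexP: l => i2 j2.
by rewrite krE !mxE !ekK /= rmorphM.
Qed.

Lemma kr1 : kr 1%:M 1%:M = 1%:M.
Proof.
apply/matrixP => k l; case/mxvec_indexP: k => i j; case/mxvec_indexP: l => i2 j2.
rewrite krE !mxE eq_mxvec.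
by case: (i == i2); case: (j == j2); rewrite /= ?mulr1 ?mulr0 ?mul0r.
Qed.

Lemma unitary_kr A B : unitary A -> unitary B -> unitary (kr A B).
Proof. by rewrite /unitary adj_kr kr_mul => -> ->; rewrite kr1. Qed.

Lemma proj_kv S1 S2 v w : proj (kset S1 S2) (kv v w) = kv (proj S1 v) (proj S2 w).
Proof.
apply/colP => k; case/mxvec_indexP: k => i j.
rewrite kvE !mxE inE ekK /=.
by case: (i \in S1); case: (j \in S2); rewrite /= ?mulr0 ?mul0r.
Qed.

Lemma sqnorm_kv v w : sqnorm (kv v w) = sqnorm v * sqnorm w.
Proof.
rewrite /sqnorm sum_ek big_distrl; apply: eq_bigr => i _.
rewrite big_distrr; apply: eq_bigr => j _.
by rewrite kvE sqmodM.
Qed.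

Lemma kv0 w : kv 0 w = 0.
Proof. by apply/colP => k; rewrite !mxE mul0r. Qed.

End Kron.
Section Gen.
Variables (Sigma : finType) (M : MMQFA Sigma).

Definition psi (w : seq Sigma) := (run M (map Some w)).1.1.

Lemma psi_nil : psi [::] = init_vec M.
Proof. by []. Qed.

Lemma psi_rcons w s :
  psi (rcons w s) = proj (Qnon M) (U M (Some s) *m psi w).
Proof.
rewrite /psi /run map_rcons foldl_rcons.
by case: (foldl _ _ _) => [[ps pa] pr].
Qed.

Lemma sqnorm0 k : sqnorm (0 : 'cV[Cplx]_k) = 0.
Proof. by rewrite /sqnorm big1 // => i _; rewrite mxE sqmod0. Qed.

Lemma pa0 : end_decisive M -> forall w, (run M (map Some w)).1.2 = 0.
Proof.
move=> H; elim/last_ind => [|w s IH]; first by [].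
have := H w s; move: IH.
rewrite /run map_rcons foldl_rcons.
case: (foldl _ _ _) => [[ps pa] pr] /= -> ->.
by rewrite sqnorm0 addr0.
Qed.

Lemma acc_end : end_decisive M -> forall x,
  acc_prob M x = sqnorm (proj (Qacc M) (U M None *m psi x)).
Proof.
move=> H x; have := pa0 H x.
rewrite /acc_prob /psi /run foldl_cat /=.
by case: (foldl _ _ _) => [[ps pa] pr] /= ->; rewrite add0r.
Qed.

Lemma sqnorm_ge0 k (v : 'cV[Cplx]_k) : 0 <= sqnorm v.
Proof. by apply: sumr_ge0 => i _; apply: sqmod_ge0. Qed.

Lemma sqnorm_proj k (S : {set 'I_k}) v : sqnorm (proj S v) <= sqnorm v.
Proof.
apply: ler_sum => i _; rewrite mxE.
by case: (i \in S); rewrite ?sqmod0 ?sqmod_ge0.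
Qed.

Lemma sqnorm_dot k (v : 'cV[Cplx]_k) :
  sqnorm v = complex.Re (((map_mx conjc v)^T *m v) 0 0).
Proof.
rewrite /sqnorm mxE raddf_sum; apply: eq_bigr => i _.
by rewrite !mxE sqmodE.
Qed.

Lemma sqnorm_unitary k (A : 'M[Cplx]_k) v : unitary A -> sqnorm (A *m v) = sqnorm v.
Proof.
move=> HA; have HA' : adjmx A *m A = 1%:M by apply: mulmx1C.
rewrite !sqnorm_dot map_mxM trmx_mul mulmxA -(mulmxA _ _ A).
by rewrite -/(adjmx A) HA' mulmx1.
Qed.

Lemma sqnorm_init : sqnorm (init_vec M) = 1.
Proof.
rewrite /sqnorm (bigD1 (q0 M)) //= big1 => [|i /negbTE Hi]; rewrite mxE.
  by rewrite eqxx /sqmod /= expr1n expr0n addr0 addr0.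
by rewrite Hi sqmod0.
Qed.

Lemma psi_le1 w : sqnorm (psi w) <= 1.
Proof.
elim/last_ind: w => [|w s IH]; first by rewrite psi_nil sqnorm_init.
rewrite psi_rcons; apply: le_trans (sqnorm_proj _ _) _.
by rewrite sqnorm_unitary; [exact: IH | exact: U_unitary].
Qed.

Lemma acc_ge0 : end_decisive M -> forall x, 0 <= acc_prob M x.
Proof. by move=> H x; rewrite acc_end // sqnorm_ge0. Qed.

Lemma acc_le1 : end_decisive M -> forall x, acc_prob M x <= 1.
Proof.
move=> H x; rewrite acc_end //; apply: le_trans (sqnorm_proj _ _) _.
by rewrite sqnorm_unitary; [exact: psi_le1 | exact: U_unitary].
Qed.
End Gen.
Section Prod.
Variables (Sigma : finType) (M1 M2 : MMQFA Sigma).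
Local Notation n1 := (nst M1).
Local Notation n2 := (nst M2).

Definition prodRej : {set 'I_(n1 * n2)} :=
  [set k | ~~ (k \in kset (Qnon M1) (Qnon M2)) && (k \notin kset (Qacc M1) (Qacc M2))].

Lemma prod_disj : [disjoint kset (Qacc M1) (Qacc M2) & prodRej].
Proof.
apply/pred0P => k /=; rewrite /prodRej !inE.
by case: ((ek k).1 \in Qacc M1); case: ((ek k).2 \in Qacc M2); rewrite ?andbF.
Qed.

Definition prodM : MMQFA Sigma :=
  {| nst := n1 * n2;
     U := fun a => kr (U M1 a) (U M2 a);
     U_unitary := fun a => unitary_kr (U_unitary M1 a) (U_unitary M2 a);
     q0 := mxvec_index (q0 M1) (q0 M2);
     Qacc := kset (Qacc M1) (Qacc M2);
     Qrej := prodRej;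
     Qacc_rej_disj := prod_disj |}.

Lemma Qnon_prod : Qnon prodM = kset (Qnon M1) (Qnon M2).
Proof.
apply/setP => k; case/mxvec_indexP: k => i j.
rewrite /Qnon /= /prodRej !inE ekK /=.
by case: (i \in Qacc M1); case: (i \in Qrej M1);
   case: (j \in Qacc M2); case: (j \in Qrej M2).
Qed.

Lemma psi_prod w : psi prodM w = kv (psi M1 w) (psi M2 w).
Proof.
elim/last_ind: w => [|w s IH].
  rewrite !psi_nil; apply/colP => k; case/mxvec_indexP: k => i j.
  rewrite kvE !mxE eq_mxvec.
  by case: (i == q0 M1); case: (j == q0 M2); rewrite /= ?mulr1 ?mulr0 ?mul0r.
by rewrite !psi_rcons IH Qnon_prod /= kr_mulv proj_kv.
Qed.

Lemma prod_ed : end_decisive M1 -> end_decisive M2 -> end_decisive prodM.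
Proof.
move=> H1 H2 w s; rewrite -/(psi prodM w) psi_prod /= kr_mulv proj_kv.
have := H1 w s; rewrite -/(psi M1 w). move=> ->. apply/colP => k; by rewrite !mxE mul0r.
Qed.

Lemma acc_prod : end_decisive M1 -> end_decisive M2 -> forall x,
  acc_prob prodM x = acc_prob M1 x * acc_prob M2 x.
Proof.
move=> H1 H2 x; rewrite !acc_end //; last exact: prod_ed.
by rewrite psi_prod /= kr_mulv proj_kv sqnorm_kv.
Qed.
End Prod.

Fixpoint powM (Sigma : finType) (M : MMQFA Sigma) (k : nat) : MMQFA Sigma :=
  match k with 0%N => M | k'.+1 => prodM (powM M k') M end.

Lemma powM_ed (Sigma : finType) (M : MMQFA Sigma) k :
  end_decisive M -> end_decisive (powM M k) /\
  forall x, acc_prob (powM M k) x = acc_prob M x ^+ k.+1.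
Proof.
move=> H; elim: k => [|k [IH1 IH2]] /=; first by split => // x; rewrite expr1.
split; first exact: prod_ed.
by move=> x; rewrite (acc_prod IH1 H) IH2 -exprSr.
Qed.
Lemma bern (d : Real) n : 0 <= d -> 1 + n%:R * d <= (1 + d) ^+ n.
Proof.
move=> Hd; elim: n => [|n IH]; first by rewrite expr0 mul0r addr0.
rewrite exprSr; apply: le_trans (ler_wpM2r _ IH); last by lra.
rewrite -addn1 natrD; have := ler0n Real n; nra.
Qed.

Lemma exists_pow (a b c : Real) : 0 < a -> a < b -> 0 < c ->
  exists N, a ^+ N.+1 < b ^+ N.+1 * c.
Proof.
move=> Ha Hab Hc; set d := b / a - 1.
have Hd : 0 < d by rewrite /d subr_gt0 ltr_pdivlMr // mul1r.
have Hcd : 0 <= c^-1 / d by rewrite divr_ge0 // ?invr_ge0 ltW.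
exists (Num.Def.archi_bound (c^-1 / d)).
set N := Num.Def.archi_bound _.
have HN := archi_boundP Hcd.
have HB := bern N.+1 (ltW Hd).
have Hr : b / a = 1 + d by rewrite /d addrC subrK.
have H1 : c^-1 < N.+1%:R * d.
  rewrite -(ltr_pdivrMr _ _ Hd); apply: lt_trans HN _; by rewrite ltr_nat ltnSn.
have Hpow : 1 < (b/a)^+N.+1 * c.
  rewrite -ltr_pdivrMr // mul1r Hr; apply: lt_le_trans HB; lra.
by rewrite expr_div_n mulrAC ltr_pdivlMr ?exprn_gt0 // mul1r in Hpow.
Qed.

Theorem lemma4p14 (Sigma : finType) (M M' : MMQFA Sigma)
  (L L' : seq Sigma -> Prop) :
  end_decisive M -> accepts_bounded_error M L ->
  end_decisive M' -> accepts_bounded_pos_one_sided M' L' ->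
  exists M'' : MMQFA Sigma,
    accepts_bounded_error M'' (fun x => L x /\ L' x).
Proof.
move=> H1 [lam [eps [Heps HM]]] H2 [c [Hc HM']].
case: (lerP (lam - eps) 0) => Ha.
  exists M'; exists (c / 2), (c / 4); split; first by lra.
  move=> x; split.
    by move=> [_ HL']; have := (HM' x).1 HL'; lra.
  move=> Hn; have HL : L x.
    apply: NNPP => HnL; have := (HM x).2 HnL; have := acc_ge0 H1 x; lra.
  have HnL' : ~ L' x by move=> HL'; apply: Hn.
  rewrite ((HM' x).2 HnL'); lra.
have Hab : lam - eps < lam + eps by lra.
have [N HN] := exists_pow Ha Hab Hc.
have [Ped Pacc] := powM_ed N H1.
set A := (lam - eps) ^+ N.+1 in HN *.
set B := (lam + eps) ^+ N.+1 * c in HN *.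
have HA : 0 < A by rewrite /A exprn_gt0.
exists (prodM (powM M N) M'); exists ((A + B) / 2), ((B - A) / 2).
split; first by lra.
move=> x; rewrite (acc_prod Ped H2) Pacc; split.
  move=> [HL HL'].
  have Hp := (HM x).1 HL; have Hp' := (HM' x).1 HL'.
  have : B < acc_prob M x ^+ N.+1 * acc_prob M' x.
    rewrite /B; apply: ltr_pM; [|lra| |exact: Hp'].
      by apply: exprn_ge0; lra.
    by rewrite ltrXn2r //; lra.
  lra.
move=> Hn; case: (classic (L' x)) => HL'.
  have HnL : ~ L x by move=> HL; apply: Hn.
  have Hp := (HM x).2 HnL; have Hp0 := acc_ge0 H1 x.
  have Hq1 := acc_le1 H2 x.
  have Hq0 := acc_ge0 H2 x.
  have Hle : acc_prob M x ^+ N.+1 * acc_prob M' x <= acc_prob M x ^+ N.+1.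
    by apply: ler_piMr => //; apply: exprn_ge0.
  have Hlt : acc_prob M x ^+ N.+1 < A by rewrite /A ltrXn2r.
  lra.
rewrite ((HM' x).2 HL') mulr0; lra.
Qed.
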